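(* Let $d\leq n$ be natural numbers and let $A\subseteq \mathbb{F}_2^n$ satisfy $|A|>2\binom{n}{\leq \lfloor d/2\rfloor}$. Then $\mathsf{int\text{-}deg}(A+A)>d$.
   Context: $\mathbb{F}_2$ is the field with two elements and $A+A=\{a+b \mid a,b\in A\}\subseteq\mathbb{F}_2^n$. For $B\subseteq\mathbb{F}_2^n$ and a function $f:B\to\mathbb{F}_2$, $\deg_B(f)$ is the minimal total degree of a multilinear polynomial $P\in\mathbb{F}_2[x_1,\dots,x_n]$ with $P(b)=f(b)$ for all $b\in B$. The interpolation degree $\mathsf{int\text{-}deg}(B)$ is the maximum of $\deg_B(f)$ over all functions $f:B\to\mathbb{F}_2$, i.e. the smallest $d$ such that every function $B\to\mathbb{F}_2$ agrees on $B$ with some polynomial of degree at most $d$. The notation $\binom{n}{\leq k}$ means $\sum_{i=0}^{k}\binom{n}{i}$. *)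

(* Defs.v *)
From mathcomp Require Import all_boot all_order all_algebra.
Set Implicit Arguments. Unset Strict Implicit. Unset Printing Implicit Defensive.
Import GRing.Theory.
Local Open Scope ring_scope.

Notation F2vec n := 'rV['F_2]_n.

Definition monom n (S : {set 'I_n}) (x : F2vec n) : 'F_2 :=
  \prod_(i in S) x 0 i.

Definition deg_leb n (B : {set F2vec n}) (f : F2vec n -> 'F_2) (d : nat) : bool :=
  [exists c : {ffun {set 'I_n} -> 'F_2},
     [forall b in B, f b == \sum_(S : {set 'I_n} | (#|S| <= d)%N) c S * monom S b]].

(* deg_B(f): least d with deg_leb B f d (default n; degree n always suffices). *)
Definition degB n (B : {set F2vec n}) (f : F2vec n -> 'F_2) : nat :=
  \big[minn/n]_(d < n.+1 | deg_leb B f d) d.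

(* int-deg(B) = max over all functions B -> F_2 of deg_B(f)
   (functions on B are represented by total functions, only values on B matter). *)
Definition int_deg n (B : {set F2vec n}) : nat :=
  \max_(f : {ffun F2vec n -> 'F_2}) degB B f.

Definition sumset n (A : {set F2vec n}) : {set F2vec n} :=
  [set a + b | a in A, b in A].

Definition binom_le (n k : nat) : nat := \sum_(i < k.+1) 'C(n, i).

(* Main.v *)
Require Import Defs.
From mathcomp Require Import all_boot all_order all_algebra zify.
Set Implicit Arguments. Unset Strict Implicit. Unset Printing Implicit Defensive.
Import GRing.Theory.

Definition Kset n k := [set T : {set 'I_n} | (#|T| <= k)%N].

Lemma card_Kset n k : #|Kset n k| = binom_le n k.
Proof.
elim: k => [|k IH].
  have -> : Kset n 0 = [set T : {set 'I_n} | #|T| == 0%N].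
    by apply/setP => T; rewrite !inE leqn0.
  by rewrite card_draws card_ord /binom_le big_ord1.
rewrite /binom_le big_ord_recr /= -/(binom_le n k) -IH -(cardsID (Kset n k) (Kset n k.+1)).
congr (_ + _)%N.
  apply: eq_card => T; rewrite !inE; apply/andP/idP => [[]//|h]; split => //.
  exact: leqW.
rewrite -[X in 'C(X, _)](card_ord n) -card_draws; apply: eq_card => T.
by rewrite !inE -ltnNge eqn_leq andbC.
Qed.

Lemma binom_le_mono n k1 k2 : (k1 <= k2)%N -> (binom_le n k1 <= binom_le n k2)%N.
Proof.
move=> h; rewrite -!card_Kset; apply: subset_leq_card; apply/subsetP => T.
by rewrite !inE => /leq_trans; apply.
Qed.

Lemma pow_le n : (2 ^ n <= 2 * binom_le n n./2)%N.
Proof.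
rewrite -card_Kset.
have -> : (2 ^ n = #|[set: {set 'I_n}]|)%N by rewrite -powersetT card_powerset cardsT card_ord.
have H : [set: {set 'I_n}] \subset Kset n n./2 :|: ((fun X : {set 'I_n} => ~: X) @: Kset n n./2).
  apply/subsetP => T _; rewrite inE.
  case: (boolP (T \in Kset n n./2)) => //= h; apply/imsetP; exists (~: T); last by rewrite setCK.
  move: h; rewrite !inE -ltnNge => h.
  have := cardsC T; rewrite card_ord.
  have := odd_double_half n; rewrite -addnn.
  lia.
apply: leq_trans (subset_leq_card H) _.
rewrite mul2n -addnn; apply: leq_trans (leq_card_setU _ _) _.
by rewrite leq_add2l leq_imset_card.
Qed.

Local Open Scope ring_scope.
Lemma oppF2 (x : 'F_2) : - x = x.
Proof. exact: (oppr_pchar2 (pchar_Fp (isT : prime 2))). Qed.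

Lemma vec_add_eq0 n (x y : 'rV['F_2]_n) : (x + y == 0) = (x == y).
Proof.
have Ny : - y = y by apply/matrixP => i j; rewrite mxE oppF2.
by rewrite -[in RHS]subr_eq0 Ny.
Qed.

Lemma monom_add n (S : {set 'I_n}) (x y : 'rV['F_2]_n) :
  monom S (x + y) = \sum_(T : {set 'I_n} | T \subset S) monom T x * monom (S :\: T) y.
Proof.
rewrite /monom big_mkcond /=.
transitivity (\prod_i ((if i \in S then x 0 i else 0) + (if i \in S then y 0 i else 1))).
  by apply: eq_bigr => i _; rewrite mxE; case: (i \in S); rewrite ?add0r.
rewrite bigA_distr [RHS]big_mkcond /=; apply: eq_bigr => J _.
case: ifP => JS.
  rewrite [\prod_(i in J) _]big_mkcond [\prod_(i in S :\: J) _]big_mkcond -big_split /=; apply: eq_bigr => i _.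
  rewrite in_setD; case iJ: (i \in J); case iS: (i \in S) => /=; rewrite ?mulr1 ?mul1r //.
  by move/subsetP: JS => /(_ i); rewrite iJ iS => /(_ isT).
case/subsetPn: JS => i iJ iS.
by rewrite (bigD1 i) //= iJ (negbTE iS) mul0r.
Qed.

Lemma core n (A : {set 'rV['F_2]_n}) d :
  (2 * binom_le n d./2 < #|A|)%N -> ~~ deg_leb (sumset A) [ffun z => ((z == 0)%:R : 'F_2)] d.
Proof.
move=> hA; apply/negP => /existsP [c /forallP Hc].
set k := d./2.
pose mv (U : {set 'I_n}) : 'rV['F_2]_#|A| := \row_a monom U (enum_val a).
pose K := Kset n k.
pose R : 'M['F_2]_(#|K|, #|A|) := \matrix_(j < #|K|) mv (enum_val j).
have subR U : U \in K -> (mv U <= R)%MS.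
  move=> UK; have -> : mv U = row (enum_rank_in UK U) R by rewrite rowK enum_rankK_in.
  exact: row_sub.
pose term S T := c S *: ((mv T)^T *m mv (S :\: T)).
pose G1 := \sum_(S : {set 'I_n} | (#|S| <= d)%N) \sum_(T : {set 'I_n} | (T \subset S) && (#|T| <= k)%N) term S T.
pose G2 := \sum_(S : {set 'I_n} | (#|S| <= d)%N) \sum_(T : {set 'I_n} | (T \subset S) && ~~(#|T| <= k)%N) term S T.
have hd : (d <= k.*2.+1)%N by have := odd_double_half d; rewrite /k -!addnn; case: odd => /=; lia.
have G2R : (G2 <= R)%MS.
  apply/summx_sub => S Sd; apply/summx_sub => T /andP[TS Tk].
  apply/scalemx_sub; apply: submx_trans (submxMl _ _) _; apply: subR.
  rewrite inE cardsD (setIidPr TS); move: Sd Tk hd; rewrite -ltnNge -!addnn; lia.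
have G1R : (G1^T <= R)%MS.
  have trS (I : finType) (P : pred I) m1 m2 (F : I -> 'M['F_2]_(m1, m2)) :
      (\sum_(i | P i) F i)^T = \sum_(i | P i) (F i)^T.
    by apply/matrixP => i j; rewrite !(mxE, summxE); apply: eq_bigr => l _; rewrite mxE.
  rewrite /G1 trS; apply/summx_sub => S Sd; rewrite trS.
  apply/summx_sub => T /andP[TS Tk].
  have trZ (a : 'F_2) m1 m2 (M : 'M['F_2]_(m1, m2)) : (a *: M)^T = a *: M^T by apply/matrixP => i j; rewrite !mxE.
  rewrite /term trZ trmx_mul trmxK; apply/scalemx_sub.
  by apply: submx_trans (submxMl _ _) _; apply: subR; rewrite inE.
have GI : G1 + G2 = 1%:M.
  have -> : G1 + G2 = \sum_(S : {set 'I_n} | (#|S| <= d)%N) \sum_(T : {set 'I_n} | T \subset S) term S T.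
    rewrite /G1 /G2 -big_split; apply: eq_bigr => S _.
    exact: (esym (bigID (fun T : {set 'I_n} => (#|T| <= k)%N) _ _)).
  apply/matrixP => a b; rewrite summxE.
  transitivity (\sum_(S : {set 'I_n} | (#|S| <= d)%N) c S * monom S (enum_val a + enum_val b)).
    apply: eq_bigr => S _; rewrite summxE monom_add big_distrr /=.
    by apply: eq_bigr => T _; rewrite /term !mxE big_ord1 !mxE.
  have := Hc (enum_val a + enum_val b).
  rewrite (_ : _ \in sumset A) /=; last by apply/imset2P; exists (enum_val a) (enum_val b); rewrite ?enum_valP.
  rewrite ffunE => /eqP <-; rewrite vec_add_eq0 (inj_eq enum_val_inj) !mxE.
  by [].
have := mxrank_add G1 G2; rewrite GI mxrank1.
have := mxrankS G2R; have := mxrankS G1R; rewrite mxrank_tr; have := rank_leq_row R.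
have hK : #|K| = binom_le n k := card_Kset n k.
move: hA; rewrite -/k; lia.
Qed.

Lemma card_vec n : #|{: 'rV['F_2]_n}| = (2 ^ n)%N.
Proof. by rewrite card_mx card_Fp // mul1n. Qed.

Local Close Scope ring_scope.

Theorem theorem1p6 (n d : nat) (A : {set 'rV['F_2]_n}) :
  (d <= n)%N ->
  (2 * binom_le n d./2 < #|A|)%N ->
  (d < int_deg (sumset A))%N.
Proof.
move=> hdn hA.
have hdn' : (d < n)%N.
  rewrite ltn_neqAle hdn andbT; apply/negP => /eqP Edn; move: hA; rewrite Edn.
  have := pow_le n; have := max_card A; rewrite card_vec; lia.
rewrite /int_deg; apply: leq_trans (leq_bigmax [ffun z : 'rV['F_2]_n => ((z == 0)%:R : 'F_2)%R]).
rewrite /degB; apply: (big_ind (fun x => d < x)%N) => //.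
  by move=> x y; rewrite leq_min => -> ->.
move=> [d' /= _] hd'; rewrite ltnNge; apply/negP => hle.
move: hd'; apply/negP; apply: core.
apply: leq_ltn_trans hA; rewrite leq_mul2l binom_le_mono ?orbT //; exact: half_leq.
Qed.
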